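(* As $\rho\to0$, $$k(\rho)=\rho^\theta+O(\rho^{3\theta}),\qquad k'(\rho)=\frac{\sqrt{p'(\rho)}}{\rho+\varepsilon p(\rho)}=\theta\rho^{\theta-1}+O(\rho^{3\theta-1}),$$ $$k''(\rho)=\theta(\theta-1)\rho^{\theta-2}+O(\rho^{3\theta-2}),\qquad k^{(3)}(\rho)=\theta(\theta-1)(\theta-2)\rho^{\theta-3}+O(\rho^{3\theta-3}).$$
   Context: Fix $\varepsilon>0$. The pressure $p$ is smooth on $(0,\infty)$ with $p'>0$ for $\rho>0$ and, for all sufficiently small $\rho>0$, $p(\rho)=\kappa\rho^\gamma(1+P(\rho))$ with $\gamma\in(1,3)$, $\kappa=\frac{(\gamma-1)^2}{4\gamma}$, $|P^{(n)}(\rho)|\le C\rho^{\gamma-1-n}$ for $0\le n\le4$. $\theta=\frac{\gamma-1}{2}$ and $k(\rho)=\int_0^\rho\frac{\sqrt{p'(s)}}{s+\varepsilon p(s)}ds$. *)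

(* Defs.v *)
From Stdlib Require Import Reals.
From Coquelicot Require Import Coquelicot.
Open Scope R_scope.

Definition kappa (gamma : R) : R := (gamma - 1) ^ 2 / (4 * gamma).

Definition theta (gamma : R) : R := (gamma - 1) / 2.

Definition k_integrand (eps : R) (p : R -> R) (s : R) : R :=
  sqrt (Derive p s) / (s + eps * p s).

Definition k_fun (eps : R) (p : R -> R) (rho : R) : R :=
  RInt_gen (k_integrand eps p) (at_right 0) (at_point rho).

(* Main.v *)
Require Import Defs.
From Stdlib Require Import Reals Lra Psatz FunctionalExtensionality Classical.
From Coquelicot Require Import Coquelicot.
Open Scope R_scope.

Lemma Rpow_pos (s a : R) : 0 < Rpower s a.
Proof. unfold Rpower; apply exp_pos. Qed.

Lemma Rpow_mono_exp (s a b : R) : 0 < s <= 1 -> b <= a -> Rpower s a <= Rpower s b.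
Proof.
  intros [Hs H1] Hab. unfold Rpower.
  assert (ln s <= 0).
  { destruct H1 as [H1|H1]. left. rewrite <- ln_1. apply ln_increasing; lra. subst; rewrite ln_1; lra. }
  destruct (Req_dec (a * ln s) (b * ln s)) as [E|E]. rewrite E; lra.
  left; apply exp_increasing. nra.
Qed.

Lemma Rpow_small (a eta : R) : 0 < a -> 0 < eta ->
  exists del, 0 < del /\ forall s, 0 < s < del -> Rpower s a <= eta.
Proof.
  intros Ha He. exists (Rpower eta (/ a)). split. apply Rpow_pos.
  intros s Hs. replace eta with (Rpower (Rpower eta (/a)) a).
  apply Rle_Rpower_l; lra.
  rewrite Rpower_mult. replace (/a * a) with 1 by (field; lra). apply Rpower_1; lra.
Qed.

Lemma is_derive_Rpower (s a : R) : 0 < s ->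
  is_derive (fun x => Rpower x a) s (a * Rpower s (a - 1)).
Proof. intros; apply is_derive_Reals, derivable_pt_lim_power; auto. Qed.

Lemma Rpow_mul (s a b : R) : Rpower s a * Rpower s b = Rpower s (a + b).
Proof. rewrite Rpower_plus; auto. Qed.

Definition Good (a : R) (u u1 u2 : R -> R) : Prop :=
  exists d C, 0 < d <= 1 /\ 0 <= C /\ forall s, 0 < s < d ->
    is_derive u s (u1 s) /\ is_derive u1 s (u2 s) /\
    Rabs (u s) <= C * Rpower s a /\ Rabs (u1 s) <= C * Rpower s (a - 1) /\
    Rabs (u2 s) <= C * Rpower s (a - 2).

Lemma Good_exp_eq a b u u1 u2 : a = b -> Good a u u1 u2 -> Good b u u1 u2.
Proof. intros ->; auto. Qed.

Lemma Good_ext a u u1 u2 v v1 v2 : (forall s, u s = v s) -> (forall s, u1 s = v1 s) -> (forall s, u2 s = v2 s) ->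
  Good a u u1 u2 -> Good a v v1 v2.
Proof.
  intros E E1 E2.
  assert (u = v) by (apply functional_extensionality; auto).
  assert (u1 = v1) by (apply functional_extensionality; auto).
  assert (u2 = v2) by (apply functional_extensionality; auto).
  subst; auto.
Qed.

Lemma Good_weaken a b u u1 u2 : b <= a -> Good a u u1 u2 -> Good b u u1 u2.
Proof.
  intros Hab [d [C [Hd [HC H]]]]. exists d, C; split; [lra|split;[lra|]].
  intros x Hs; destruct (H x Hs) as (D1 & D2 & B0 & B1 & B2). refine (conj _ (conj _ (conj _ (conj _ _)))); auto.
  - eapply Rle_trans; [exact B0|]. apply Rmult_le_compat_l; auto. apply Rpow_mono_exp; lra.
  - eapply Rle_trans; [exact B1|]. apply Rmult_le_compat_l; auto. apply Rpow_mono_exp; lra.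
  - eapply Rle_trans; [exact B2|]. apply Rmult_le_compat_l; auto. apply Rpow_mono_exp; lra.
Qed.

Lemma Good_plus a u u1 u2 v v1 v2 : Good a u u1 u2 -> Good a v v1 v2 ->
  Good a (fun s => u s + v s) (fun s => u1 s + v1 s) (fun s => u2 s + v2 s).
Proof.
  intros [d [C [Hd [HC H]]]] [d' [C' [Hd' [HC' H']]]].
  exists (Rmin d d'), (C + C'). split. split. apply Rmin_glb_lt; lra. 
  eapply Rle_trans. apply Rmin_l. lra. split. lra.
  intros s Hs. assert (Hs1 : 0 < s < d) by (split; [lra| eapply Rlt_le_trans; [apply Hs| apply Rmin_l]]).
  assert (Hs2 : 0 < s < d') by (split; [lra| eapply Rlt_le_trans; [apply Hs| apply Rmin_r]]).
  destruct (H s Hs1) as (D1 & D2 & B0 & B1 & B2).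
  destruct (H' s Hs2) as (D1' & D2' & B0' & B1' & B2').
  pose proof (Rpow_pos s a). pose proof (Rpow_pos s (a-1)). pose proof (Rpow_pos s (a-2)).
  refine (conj _ (conj _ (conj _ (conj _ _)))).
  - exact (is_derive_plus _ _ _ _ _ D1 D1').
  - exact (is_derive_plus _ _ _ _ _ D2 D2').
  - eapply Rle_trans. apply Rabs_triang. nra.
  - eapply Rle_trans. apply Rabs_triang. nra.
  - eapply Rle_trans. apply Rabs_triang. nra.
Qed.

Lemma is_derive_eq (f : R -> R) (x l l' : R) : is_derive f x l -> l = l' -> is_derive f x l'.
Proof. intros H ->; exact H. Qed.

Lemma is_derive_mult' (f g : R -> R) x df dg : is_derive f x df -> is_derive g x dg ->
  is_derive (fun t => f t * g t) x (df * g x + f x * dg).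
Proof. intros H1 H2. exact (is_derive_mult f g x df dg H1 H2 Rmult_comm). Qed.

Lemma is_derive_plus' (f g : R -> R) x df dg : is_derive f x df -> is_derive g x dg ->
  is_derive (fun t => f t + g t) x (df + dg).
Proof. intros H1 H2. exact (is_derive_plus f g x df dg H1 H2). Qed.

Lemma bound_mul x y C C' s a b : Rabs x <= C * Rpower s a -> Rabs y <= C' * Rpower s b -> 0 <= C ->
  Rabs (x * y) <= C * C' * Rpower s (a + b).
Proof.
  intros H1 H2 HC. rewrite Rabs_mult, <- Rpow_mul.
  pose proof (Rabs_pos x); pose proof (Rabs_pos y). pose proof (Rpow_pos s a). pose proof (Rpow_pos s b).
  apply Rle_trans with (C * Rpower s a * Rabs y). apply Rmult_le_compat_r; auto.
  replace (C * C' * (Rpower s a * Rpower s b)) with (C * Rpower s a * (C' * Rpower s b)) by ring.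
  apply Rmult_le_compat_l; nra.
Qed.

Lemma Good_mult a b u u1 u2 v v1 v2 : Good a u u1 u2 -> Good b v v1 v2 ->
  Good (a + b) (fun s => u s * v s) (fun s => u1 s * v s + u s * v1 s)
    (fun s => u2 s * v s + 2 * (u1 s * v1 s) + u s * v2 s).
Proof.
  intros [d [C [Hd [HC H]]]] [d' [C' [Hd' [HC' H']]]].
  exists (Rmin d d'), (4 * (C * C')). split. split. apply Rmin_glb_lt; lra. 
  eapply Rle_trans. apply Rmin_l. lra. split. nra.
  intros s Hs. assert (Hs1 : 0 < s < d) by (split; [lra| eapply Rlt_le_trans; [apply Hs| apply Rmin_l]]).
  assert (Hs2 : 0 < s < d') by (split; [lra| eapply Rlt_le_trans; [apply Hs| apply Rmin_r]]).
  destruct (H s Hs1) as (D1 & D2 & B0 & B1 & B2).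
  destruct (H' s Hs2) as (D1' & D2' & B0' & B1' & B2').
  pose proof (Rpow_pos s (a+b)). pose proof (Rpow_pos s (a+b-1)). pose proof (Rpow_pos s (a+b-2)).
  assert (HCC : 0 <= C * C') by nra.
  refine (conj _ (conj _ (conj _ (conj _ _)))).
  - apply is_derive_mult'; auto.
  - apply (is_derive_eq _ _ _ _ (is_derive_plus' _ _ _ _ _ (is_derive_mult' _ _ _ _ _ D2 D1') (is_derive_mult' _ _ _ _ _ D1 D2'))). ring.
  - pose proof (bound_mul _ _ _ _ _ _ _ B0 B0' HC). nra.
  - pose proof (bound_mul _ _ _ _ _ _ _ B1 B0' HC). pose proof (bound_mul _ _ _ _ _ _ _ B0 B1' HC).
    replace (a - 1 + b) with (a + b - 1) in * by ring. replace (a + (b - 1)) with (a + b - 1) in * by ring.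
    eapply Rle_trans. apply Rabs_triang. nra.
  - pose proof (bound_mul _ _ _ _ _ _ _ B2 B0' HC). pose proof (bound_mul _ _ _ _ _ _ _ B1 B1' HC).
    pose proof (bound_mul _ _ _ _ _ _ _ B0 B2' HC).
    replace (a - 2 + b) with (a + b - 2) in * by ring. replace (a + (b - 2)) with (a + b - 2) in * by ring.
    replace (a - 1 + (b - 1)) with (a + b - 2) in * by ring.
    eapply Rle_trans. apply Rabs_triang. eapply Rle_trans. apply Rplus_le_compat_r. apply Rabs_triang.
    rewrite (Rabs_mult 2), (Rabs_right 2) by lra. nra.
Qed.

Lemma Good_const c : Good 0 (fun _ => c) (fun _ => 0) (fun _ => 0).
Proof.
  exists 1, (Rabs c). split. lra. split. apply Rabs_pos. intros s Hs.
  rewrite Rpower_O by lra. pose proof (Rpow_pos s (0-1)). pose proof (Rpow_pos s (0-2)).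
  pose proof (Rabs_pos c).
  refine (conj _ (conj _ (conj _ (conj _ _)))).
  - apply (is_derive_const c s).
  - apply (is_derive_const 0 s).
  - lra.
  - rewrite Rabs_R0. nra.
  - rewrite Rabs_R0. nra.
Qed.

Lemma Good_id : Good 1 (fun s => s) (fun _ => 1) (fun _ => 0).
Proof.
  exists 1, 1. split. lra. split. lra. intros s Hs.
  rewrite Rpower_1 by lra. replace (1-1) with 0 by ring. rewrite Rpower_O by lra.
  pose proof (Rpow_pos s (1-2)).
  refine (conj _ (conj _ (conj _ (conj _ _)))).
  - apply (is_derive_id s).
  - apply (is_derive_const 1 s).
  - rewrite Rabs_right; lra.
  - rewrite Rabs_right; lra.
  - rewrite Rabs_R0. nra.
Qed.

Lemma Good_pow a : Good a (fun s => Rpower s a) (fun s => a * Rpower s (a - 1))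
  (fun s => a * ((a - 1) * Rpower s (a - 1 - 1))).
Proof.
  exists 1, (1 + Rabs a + Rabs (a * (a - 1))). split. lra. split.
  pose proof (Rabs_pos a); pose proof (Rabs_pos (a * (a-1))); lra. intros s Hs.
  pose proof (Rpow_pos s a). pose proof (Rpow_pos s (a-1)). pose proof (Rpow_pos s (a-2)).
  pose proof (Rabs_pos a); pose proof (Rabs_pos (a * (a-1))).
  refine (conj _ (conj _ (conj _ (conj _ _)))).
  - apply is_derive_Rpower; lra.
  - apply is_derive_scal. apply is_derive_Rpower; lra.
  - rewrite Rabs_right by lra. nra.
  - rewrite Rabs_mult, (Rabs_right (Rpower _ _)) by lra. nra.
  - replace (a - 1 - 1) with (a - 2) by ring.
    replace (a * ((a - 1) * Rpower s (a - 2))) with ((a * (a - 1)) * Rpower s (a - 2)) by ring.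
    rewrite Rabs_mult, (Rabs_right (Rpower _ _)) by lra. nra.
Qed.

Lemma Good_small a u u1 u2 : Good a u u1 u2 -> 0 < a -> forall eta, 0 < eta ->
  exists del, 0 < del /\ forall s, 0 < s < del -> Rabs (u s) <= eta.
Proof.
  intros [d [C [Hd [HC H]]]] Ha eta He.
  assert (Hq : 0 < eta / (C + 1)) by (apply Rdiv_lt_0_compat; lra).
  destruct (Rpow_small a (eta / (C + 1)) Ha Hq) as [del [Hdel Hs]].
  exists (Rmin d del). split. apply Rmin_glb_lt; lra.
  intros s Hs'. assert (Hs1 : 0 < s < d) by (split; [lra| eapply Rlt_le_trans; [apply Hs'| apply Rmin_l]]).
  assert (Hs2 : 0 < s < del) by (split; [lra| eapply Rlt_le_trans; [apply Hs'| apply Rmin_r]]).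
  destruct (H s Hs1) as (_ & _ & B0 & _).
  specialize (Hs s Hs2).
  assert (C * Rpower s a <= C * (eta / (C + 1))) by (apply Rmult_le_compat_l; auto).
  assert (C * (eta / (C + 1)) <= eta).
  { unfold Rdiv. apply Rle_trans with ((C+1) * (eta * / (C + 1))). nra.
    right. field. lra. }
  lra.
Qed.

Lemma Good_comp a u u1 u2 (phi phi1 phi2 : R -> R) K :
  Good a u u1 u2 -> 0 < a -> 0 <= K ->
  (forall x, Rabs x <= 1/2 -> is_derive phi x (phi1 x) /\ is_derive phi1 x (phi2 x) /\
     Rabs (phi x) <= K * Rabs x /\ Rabs (phi1 x) <= K /\ Rabs (phi2 x) <= K) ->
  Good a (fun s => phi (u s)) (fun s => phi1 (u s) * u1 s)
    (fun s => phi2 (u s) * (u1 s * u1 s) + phi1 (u s) * u2 s).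
Proof.
  intros HG Ha HK Hphi.
  destruct (Good_small _ _ _ _ HG Ha (1/2)) as [del [Hdel Hsm]]; [lra|].
  destruct HG as [d [C [Hd [HC H]]]].
  exists (Rmin d del), (K * (C * C + C)). split. split. apply Rmin_glb_lt; lra.
  eapply Rle_trans. apply Rmin_l. lra. split. nra.
  intros s Hs'. assert (Hs1 : 0 < s < d) by (split; [lra| eapply Rlt_le_trans; [apply Hs'| apply Rmin_l]]).
  assert (Hs2 : 0 < s < del) by (split; [lra| eapply Rlt_le_trans; [apply Hs'| apply Rmin_r]]).
  destruct (H s Hs1) as (D1 & D2 & B0 & B1 & B2).
  destruct (Hphi (u s) (Hsm s Hs2)) as (P1 & P2 & Q0 & Q1 & Q2).
  pose proof (Rpow_pos s a). pose proof (Rpow_pos s (a-1)). pose proof (Rpow_pos s (a-2)).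
  assert (E : Rpower s (2 * a - 2) <= Rpower s (a - 2)) by (apply Rpow_mono_exp; lra).
  assert (HCC : 0 <= C * C) by nra.
  pose proof (Rabs_pos (u s)). pose proof (Rabs_pos (u1 s)). pose proof (Rabs_pos (u2 s)).
  pose proof (Rabs_pos (phi1 (u s))). pose proof (Rabs_pos (phi2 (u s))).
  refine (conj _ (conj _ (conj _ (conj _ _)))).
  - apply (is_derive_eq _ _ _ _ (is_derive_comp phi u s _ _ P1 D1)). unfold scal; simpl; unfold mult; simpl. apply Rmult_comm.
  - apply (is_derive_eq _ _ _ _ (is_derive_mult' _ _ _ _ _ (is_derive_comp phi1 u s _ _ P2 D1) D2)).
    unfold scal; simpl; unfold mult; simpl. change (u1 s * phi2 (u s) * u1 s + phi1 (u s) * u2 s = phi2 (u s) * (u1 s * u1 s) + phi1 (u s) * u2 s). ring.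
  - assert (K * Rabs (u s) <= K * (C * Rpower s a)) by (apply Rmult_le_compat_l; auto).
    assert (0 <= K * (C * C) * Rpower s a) by (apply Rmult_le_pos; [apply Rmult_le_pos|]; lra).
    nra.
  - rewrite Rabs_mult.
    assert (Rabs (phi1 (u s)) * Rabs (u1 s) <= K * (C * Rpower s (a-1))) by (apply Rmult_le_compat; auto).
    assert (0 <= K * (C * C) * Rpower s (a-1)) by (apply Rmult_le_pos; [apply Rmult_le_pos|]; lra).
    nra.
  - eapply Rle_trans. apply Rabs_triang. rewrite !Rabs_mult.
    pose proof (bound_mul _ _ _ _ _ _ _ B1 B1 HC) as HB11.
    rewrite Rabs_mult in HB11. replace (a - 1 + (a - 1)) with (2 * a - 2) in HB11 by ring.
    assert (Rabs (phi2 (u s)) * (Rabs (u1 s) * Rabs (u1 s)) <= K * (C * C * Rpower s (a - 2))).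
    { apply Rmult_le_compat; auto. apply Rmult_le_pos; auto.
      eapply Rle_trans. exact HB11. apply Rmult_le_compat_l; auto. }
    assert (Rabs (phi1 (u s)) * Rabs (u2 s) <= K * (C * Rpower s (a - 2))).
    { apply Rmult_le_compat; auto. }
    nra.
Qed.

Lemma Rabs_le_inv' x b : Rabs x <= b -> - b <= x <= b.
Proof. intros H. pose proof (Rle_abs x). pose proof (Rle_abs (-x)). rewrite Rabs_Ropp in H1. lra. Qed.

Lemma phi_sqrt_ok : forall x, Rabs x <= 1/2 ->
  is_derive (fun x => sqrt (1 + x) - 1) x (/ (2 * sqrt (1 + x))) /\
  is_derive (fun x => / (2 * sqrt (1 + x))) x (- / (4 * (1 + x) * sqrt (1 + x))) /\
  Rabs (sqrt (1 + x) - 1) <= 1 * Rabs x /\ Rabs (/ (2 * sqrt (1 + x))) <= 1 /\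
  Rabs (- / (4 * (1 + x) * sqrt (1 + x))) <= 1.
Proof.
  intros x Hx. apply Rabs_le_inv' in Hx.
  assert (Hp : 0 < 1 + x) by lra.
  pose proof (sqrt_lt_R0 _ Hp) as Ht. pose proof (sqrt_sqrt (1+x) (Rlt_le _ _ Hp)) as Ht2.
  assert (Ht7 : 7/10 <= sqrt (1 + x)) by nra.
  refine (conj _ (conj _ (conj _ (conj _ _)))).
  - auto_derive. lra. field. lra.
  - auto_derive. repeat split; lra.
    replace (4 * (1 + x) * sqrt (1 + x)) with (4 * (sqrt (1 + x) * sqrt (1 + x)) * sqrt (1 + x)) by (rewrite Ht2; ring).
    field. lra.
  - set (t := sqrt (1 + x)) in *.
    rewrite Rmult_1_l. replace (t - 1) with (x / (t + 1)). 2: { replace x with (t * t - 1) at 1 by lra. field. lra. }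
    unfold Rdiv. rewrite Rabs_mult. rewrite (Rabs_right (/ (t+1))).
    2: { apply Rle_ge, Rlt_le, Rinv_0_lt_compat; lra. }
    pose proof (Rabs_pos x).
    assert (/ (t + 1) <= 1). { rewrite <- Rinv_1. apply Rinv_le_contravar; lra. }
    nra.
  - set (t := sqrt (1 + x)) in *. rewrite Rabs_right. 2: { apply Rle_ge, Rlt_le, Rinv_0_lt_compat; lra. }
    rewrite <- Rinv_1. apply Rinv_le_contravar; lra.
  - set (t := sqrt (1 + x)) in *. rewrite Rabs_Ropp, Rabs_right. 2: { apply Rle_ge, Rlt_le, Rinv_0_lt_compat; nra. }
    rewrite <- Rinv_1. apply Rinv_le_contravar. lra. nra.
Qed.

Lemma phi_inv_ok : forall x, Rabs x <= 1/2 ->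
  is_derive (fun x => / (1 + x) - 1) x (- / ((1 + x) * (1 + x))) /\
  is_derive (fun x => - / ((1 + x) * (1 + x))) x (2 / ((1 + x) * (1 + x) * (1 + x))) /\
  Rabs (/ (1 + x) - 1) <= 16 * Rabs x /\ Rabs (- / ((1 + x) * (1 + x))) <= 16 /\
  Rabs (2 / ((1 + x) * (1 + x) * (1 + x))) <= 16.
Proof.
  intros x Hx. apply Rabs_le_inv' in Hx.
  assert (Hp : 1/2 <= 1 + x) by lra.
  refine (conj _ (conj _ (conj _ (conj _ _)))).
  - auto_derive. lra. field. lra.
  - auto_derive. nra. field. lra.
  - replace (/ (1 + x) - 1) with (- x * / (1 + x)) by (field; lra).
    rewrite Rabs_mult, Rabs_Ropp, (Rabs_right (/ (1+x))).
    2: { apply Rle_ge, Rlt_le, Rinv_0_lt_compat; lra. }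
    pose proof (Rabs_pos x).
    assert (/ (1 + x) <= 2). { replace 2 with (/ (1/2)) by field. apply Rinv_le_contravar; lra. }
    nra.
  - rewrite Rabs_Ropp, Rabs_right. 2: { apply Rle_ge, Rlt_le, Rinv_0_lt_compat; nra. }
    replace 16 with (/ (1/16)) by field. apply Rinv_le_contravar; nra.
  - unfold Rdiv. rewrite Rabs_mult, Rabs_right, (Rabs_right (/ _)). 
    2: { apply Rle_ge, Rlt_le, Rinv_0_lt_compat; nra. } 2: lra.
    assert (/ ((1 + x) * (1 + x) * (1 + x)) <= 8).
    { replace 8 with (/ (1/8)) by field. apply Rinv_le_contravar; nra. }
    lra.
Qed.

Lemma is_derive_const' (c y : R) : is_derive (fun _ => c) y 0.
Proof. apply (is_derive_const c y). Qed.

Lemma loc_int (d y : R) : 0 < y < d -> locally y (fun t => 0 < t < d).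
Proof.
  intros Hy. apply (locally_interval _ y (Finite 0) (Finite d)); simpl; try lra.
  intros; lra.
Qed.

Lemma loc_deriv (g h h' : R -> R) (d : R) :
  (forall y, 0 < y < d -> g y = h y) -> (forall y, 0 < y < d -> is_derive h y (h' y)) ->
  forall y, 0 < y < d -> is_derive g y (h' y) /\ Derive g y = h' y.
Proof.
  intros E D y Hy.
  assert (is_derive g y (h' y)).
  { apply (is_derive_ext_loc h g). 
    apply (filter_imp (fun t => 0 < t < d)). intros t Ht; symmetry; auto. apply loc_int; auto.
    auto. }
  split; auto. apply is_derive_unique; auto.
Qed.

Lemma is_derive_cpow c e y : 0 < y -> is_derive (fun y => c * Rpower y e) y (c * e * Rpower y (e - 1)).
Proof. intros. apply (is_derive_eq _ _ _ _ (is_derive_scal _ _ c _ (is_derive_Rpower y e H))). ring. Qed.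

Lemma P_chain (p P : R -> R) g ka d0 : 0 < ka ->
  (forall n x, 0 < x -> ex_derive_n p n x) ->
  (forall s, 0 < s < d0 -> p s = ka * Rpower s g * (1 + P s)) ->
  forall s, 0 < s < d0 -> is_derive P s (Derive P s) /\ is_derive (Derive P) s (Derive_n P 2 s) /\
     is_derive (Derive_n P 2) s (Derive_n P 3 s).
Proof.
  intros Hka Hsm Hp.
  assert (Hpd : forall n y, 0 < y -> is_derive (Derive_n p n) y (Derive_n p (S n) y)).
  { intros n y Hy. apply Derive_correct. exact (Hsm (S n) y Hy). }
  set (ik := / ka).
  set (r0 := fun y => ik * Rpower y (-g)).
  set (r1 := fun y => ik * (-g) * Rpower y (-g - 1)).
  set (r2 := fun y => ik * (-g) * (-g - 1) * Rpower y (-g - 1 - 1)).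
  set (r3 := fun y => ik * (-g) * (-g - 1) * (-g - 1 - 1) * Rpower y (-g - 1 - 1 - 1)).
  assert (R0 : forall y, 0 < y -> is_derive r0 y (r1 y)) by (intros; apply is_derive_cpow; auto).
  assert (R1 : forall y, 0 < y -> is_derive r1 y (r2 y)) by (intros; apply (is_derive_cpow (ik * (-g))); auto).
  assert (R2 : forall y, 0 < y -> is_derive r2 y (r3 y)) by (intros; apply (is_derive_cpow (ik * (-g) * (-g - 1))); auto).
  set (q0 := fun y => Derive_n p 0 y * r0 y + (-1)).
  set (q1 := fun y => Derive_n p 1 y * r0 y + Derive_n p 0 y * r1 y).
  set (q2 := fun y => Derive_n p 2 y * r0 y + 2 * (Derive_n p 1 y * r1 y) + Derive_n p 0 y * r2 y).
  set (q3 := fun y => Derive_n p 3 y * r0 y + 3 * (Derive_n p 2 y * r1 y) + 3 * (Derive_n p 1 y * r2 y) + Derive_n p 0 y * r3 y).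
  assert (Q0 : forall y, 0 < y -> is_derive q0 y (q1 y)).
  { intros y Hy. apply (is_derive_eq _ _ _ _ (is_derive_plus' _ _ _ _ _ (is_derive_mult' _ _ _ _ _ (Hpd 0%nat y Hy) (R0 y Hy)) (is_derive_const' (-1) y))).
    unfold q1. ring. }
  assert (Q1 : forall y, 0 < y -> is_derive q1 y (q2 y)).
  { intros y Hy. apply (is_derive_eq _ _ _ _ (is_derive_plus' _ _ _ _ _ (is_derive_mult' _ _ _ _ _ (Hpd 1%nat y Hy) (R0 y Hy)) (is_derive_mult' _ _ _ _ _ (Hpd 0%nat y Hy) (R1 y Hy)))).
    unfold q2. ring. }
  assert (Q2 : forall y, 0 < y -> is_derive q2 y (q3 y)).
  { intros y Hy. apply (is_derive_eq _ _ _ _ (is_derive_plus' _ _ _ _ _ (is_derive_plus' _ _ _ _ _ (is_derive_mult' _ _ _ _ _ (Hpd 2%nat y Hy) (R0 y Hy)) (is_derive_scal _ _ 2 _ (is_derive_mult' _ _ _ _ _ (Hpd 1%nat y Hy) (R1 y Hy)))) (is_derive_mult' _ _ _ _ _ (Hpd 0%nat y Hy) (R2 y Hy)))).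
    unfold q3. ring. }
  assert (E0 : forall y, 0 < y < d0 -> P y = q0 y).
  { intros y Hy. unfold q0, r0; simpl. rewrite (Hp y Hy).
    rewrite Rpower_Ropp. unfold ik. pose proof (Rpow_pos y g). field; split; lra. }
  assert (S1 := loc_deriv P q0 q1 d0 E0 (fun y Hy => Q0 y (proj1 Hy))).
  assert (E1 : forall y, 0 < y < d0 -> Derive P y = q1 y) by (intros; apply S1; auto).
  assert (S2 := loc_deriv (Derive P) q1 q2 d0 E1 (fun y Hy => Q1 y (proj1 Hy))).
  assert (E2 : forall y, 0 < y < d0 -> Derive_n P 2 y = q2 y) by (intros; apply S2; auto).
  assert (S3 := loc_deriv (Derive_n P 2) q2 q3 d0 E2 (fun y Hy => Q2 y (proj1 Hy))).
  intros s Hs. split; [|split].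
  - rewrite (E1 s Hs). apply S1; auto.
  - rewrite (E2 s Hs). apply S2; auto.
  - destruct (S3 s Hs) as [H1 H2]. change (Derive_n P 3 s) with (Derive (Derive_n P 2) s). rewrite H2. auto.
Qed.

Lemma GoodP (P : R -> R) g C d0 : 0 < d0 ->
  (forall s, 0 < s < d0 -> is_derive P s (Derive P s) /\ is_derive (Derive P) s (Derive_n P 2 s) /\
     is_derive (Derive_n P 2) s (Derive_n P 3 s)) ->
  (forall s, 0 < s < d0 -> forall n : nat, (n <= 4)%nat ->
         Rabs (Derive_n P n s) <= C * Rpower s (g - 1 - INR n)) ->
  Good (g - 1) P (Derive P) (Derive_n P 2) /\ Good (g - 1 - 1) (Derive P) (Derive_n P 2) (Derive_n P 3).
Proof.
  intros Hd0 Hch Hb.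
  assert (Hb' : forall s, 0 < s < d0 -> forall n : nat, (n <= 4)%nat ->
         Rabs (Derive_n P n s) <= Rabs C * Rpower s (g - 1 - INR n)).
  { intros s Hs n Hn. eapply Rle_trans. apply Hb; auto. apply Rmult_le_compat_r.
    left; apply Rpow_pos. apply Rle_abs. }
  split; exists (Rmin d0 1), (Rabs C); (split; [split; [apply Rmin_glb_lt; lra | apply Rmin_r]|split; [apply Rabs_pos|]]);
  intros s Hs; (assert (Hs1 : 0 < s < d0) by (split; [lra| eapply Rlt_le_trans; [apply Hs| apply Rmin_l]]));
  destruct (Hch s Hs1) as (D1 & D2 & D3);
  refine (conj _ (conj _ (conj _ (conj _ _)))); auto;
  first [ eapply Rle_trans; [apply (Hb' s Hs1 0%nat); lia | right; f_equal; f_equal; simpl; ring]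
        | eapply Rle_trans; [apply (Hb' s Hs1 1%nat); lia | right; f_equal; f_equal; simpl; ring]
        | eapply Rle_trans; [apply (Hb' s Hs1 2%nat); lia | right; f_equal; f_equal; simpl; ring]
        | eapply Rle_trans; [apply (Hb' s Hs1 3%nat); lia | right; f_equal; f_equal; simpl; ring] ].
Qed.

Lemma Rpow_g (s th : R) : 0 < s ->
  Rpower s (2 * th + 1) = Rpower s (th - 1) * s * (Rpower s (th - 1) * s) * s.
Proof.
  intros Hs. transitivity (Rpower s (th - 1) * Rpower s 1 * (Rpower s (th - 1) * Rpower s 1) * Rpower s 1).
  rewrite !Rpow_mul. f_equal. ring. rewrite !Rpower_1 by lra. reflexivity.
Qed.

Lemma Rpow_2th (s th : R) : 0 < s ->
  Rpower s (2 * th) = Rpower s (th - 1) * s * (Rpower s (th - 1) * s).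
Proof.
  intros Hs. transitivity (Rpower s (th - 1) * Rpower s 1 * (Rpower s (th - 1) * Rpower s 1)).
  rewrite !Rpow_mul. f_equal. ring. rewrite !Rpower_1 by lra. reflexivity.
Qed.

Lemma main_local (eps g : R) (p : R -> R) :
  0 < eps -> 1 < g < 3 ->
  (forall (n : nat) (x : R), 0 < x -> ex_derive_n p n x) ->
  (exists (d0 C : R) (P : R -> R), 0 < d0 /\
     forall rho : R, 0 < rho < d0 ->
       p rho = kappa g * Rpower rho g * (1 + P rho) /\
       forall n : nat, (n <= 4)%nat ->
         Rabs (Derive_n P n rho) <= C * Rpower rho (g - 1 - INR n)) ->
  exists G G1 G2 d, Good (3 * theta g - 1) G G1 G2 /\ 0 < d /\
    forall s, 0 < s < d -> k_integrand eps p s = theta g * Rpower s (theta g - 1) + G s /\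
      0 <= k_integrand eps p s.
Proof.
  intros Heps Hg Hsm [d0 [C [P [Hd0 HP]]]].
  set (th := theta g). set (ka := kappa g).
  assert (Hth : 0 < th) by (unfold th, theta; lra).
  assert (Hka : 0 < ka) by (unfold ka, kappa; apply Rdiv_lt_0_compat; nra).
  assert (Hg2 : g = 2 * th + 1) by (unfold th, theta; field).
  assert (Hkag : ka * g = th * th) by (unfold ka, th, kappa, theta; field; lra).
  assert (Hp : forall s, 0 < s < d0 -> p s = ka * Rpower s g * (1 + P s)) by (intros; apply HP; auto).
  assert (Hch := P_chain p P g ka d0 Hka Hsm Hp).
  destruct (GoodP P g C d0 Hd0 Hch (fun s Hs => proj2 (HP s Hs))) as [GP GP1].
  replace (g - 1) with (2 * th) in GP by lra.
  replace (g - 1 - 1) with (2 * th - 1) in GP1 by lra.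
  pose proof (Good_mult _ _ _ _ _ _ _ _ (Good_mult _ _ _ _ _ _ _ _ Good_id (Good_const (/ g))) GP1) as GB0.
  apply Good_exp_eq with (b := 2 * th) in GB0; [|ring].
  pose proof (Good_plus _ _ _ _ _ _ _ GP GB0) as GB.
  cbv beta in GB.
  pose proof (Good_mult _ _ _ _ _ _ _ _ (Good_mult _ _ _ _ _ _ _ _ (Good_const (eps * ka)) (Good_pow (2 * th)))
        (Good_plus _ _ _ _ _ _ _ (Good_const 1) (Good_weaken (2 * th) 0 _ _ _ ltac:(lra) GP))) as GD.
  apply Good_exp_eq with (b := 2 * th) in GD; [|ring].
  cbv beta in GD.
  assert (H2th : 0 < 2 * th) by lra.
  pose proof (Good_comp _ _ _ _ _ _ _ 1 GB H2th ltac:(lra) phi_sqrt_ok) as GU.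
  pose proof (Good_comp _ _ _ _ _ _ _ 16 GD H2th ltac:(lra) phi_inv_ok) as GV.
  cbv beta in GU, GV.
  pose proof (Good_mult _ _ _ _ _ _ _ _ GU GV) as GUV.
  apply Good_weaken with (b := 2 * th) in GUV; [|lra].
  pose proof (Good_plus _ _ _ _ _ _ _ (Good_plus _ _ _ _ _ _ _ GU GV) GUV) as GA.
  cbv beta in GA.
  pose proof (Good_mult _ _ _ _ _ _ _ _ (Good_mult _ _ _ _ _ _ _ _ (Good_const th) (Good_pow (th - 1))) GA) as GG.
  apply Good_exp_eq with (b := 3 * th - 1) in GG; [|ring].
  cbv beta in GG.
  eexists _, _, _.
  destruct (Good_small _ _ _ _ GB H2th (1/2) ltac:(lra)) as [dB [HdB HB]].
  destruct (Good_small _ _ _ _ GD H2th (1/2) ltac:(lra)) as [dD [HdD HD]].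
  exists (Rmin d0 (Rmin dB dD)). split. exact GG. split.
  { apply Rmin_glb_lt; auto. apply Rmin_glb_lt; auto. }
  intros s Hs.
  assert (Hs0 : 0 < s < d0) by (split; [lra| eapply Rlt_le_trans; [apply Hs| apply Rmin_l]]).
  assert (Hs' : s < Rmin dB dD) by (eapply Rlt_le_trans; [apply Hs| apply Rmin_r]).
  assert (HsB : 0 < s < dB) by (split; [lra| eapply Rlt_le_trans; [apply Hs'| apply Rmin_l]]).
  assert (HsD : 0 < s < dD) by (split; [lra| eapply Rlt_le_trans; [apply Hs'| apply Rmin_r]]).
  specialize (HB s HsB). specialize (HD s HsD). cbv beta in HB, HD.
  apply Rabs_le_inv' in HB. apply Rabs_le_inv' in HD.
  assert (Hdp : Derive p s = ka * g * Rpower s (g - 1) * (1 + P s) + ka * Rpower s g * Derive P s).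
  { rewrite (Derive_ext_loc p (fun s => ka * Rpower s g * (1 + P s))).
    2: { apply (filter_imp (fun t => 0 < t < d0)). intros t Ht; auto. apply loc_int; auto. }
    apply is_derive_unique.
    apply (is_derive_eq _ _ _ _ (is_derive_mult' _ _ _ _ _ (is_derive_cpow ka g s (proj1 Hs0))
         (is_derive_plus' _ _ _ _ _ (is_derive_const' 1 s) (proj1 (Hch s Hs0))))). ring. }
  set (X := Rpower s (th - 1)) in *.
  assert (HX : 0 < X) by apply Rpow_pos.
  assert (E1 : Rpower s (g - 1) = X * s * (X * s)).
  { replace (g - 1) with (2 * th) by lra. apply Rpow_2th; lra. }
  assert (E2 : Rpower s g = X * s * (X * s) * s).
  { rewrite Hg2. apply Rpow_g; lra. }
  assert (E3 : Rpower s (2 * th) = X * s * (X * s)) by (apply Rpow_2th; lra).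
  set (Bv := P s + s * / g * Derive P s) in *.
  set (Dv := eps * ka * Rpower s (2 * th) * (1 + P s)) in *.
  assert (Hdp' : Derive p s = (th * X * s) * (th * X * s) * (1 + Bv)).
  { rewrite Hdp, E1, E2. unfold Bv. rewrite Hg2 in *.
    replace (ka * (2 * th + 1)) with (th * th) by (rewrite <- Hkag; ring).
    assert (Eka : ka = th * th / (2 * th + 1)) by (rewrite <- Hkag; field; lra).
    rewrite Eka. field. lra. }
  assert (Hsq : sqrt (Derive p s) = th * X * s * sqrt (1 + Bv)).
  { rewrite Hdp', sqrt_mult_alt. rewrite sqrt_square. auto.
    apply Rmult_le_pos; [apply Rmult_le_pos|]; lra. apply Rle_0_sqr. }
  assert (Hden : s + eps * p s = s * (1 + Dv)).
  { rewrite (Hp s Hs0). unfold Dv. rewrite E2, E3. ring. }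
  assert (Hsqp : 0 <= sqrt (1 + Bv)) by apply sqrt_pos.
  unfold k_integrand. rewrite Hsq, Hden. split.
  - field. split; lra.
  - apply Rmult_le_pos. apply Rmult_le_pos; [apply Rmult_le_pos; [apply Rmult_le_pos|]|]; lra.
    apply Rlt_le, Rinv_0_lt_compat. apply Rmult_lt_0_compat; lra.
Qed.

Lemma pow_int (c x y : R) : 0 < x <= y ->
  is_RInt (fun s => c * Rpower s (c - 1)) x y (Rpower y c - Rpower x c).
Proof.
  intros Hxy.
  apply (is_RInt_derive (fun s => Rpower s c) (fun s => c * Rpower s (c - 1))).
  - intros z Hz. rewrite Rmin_left, Rmax_right in Hz by lra. apply is_derive_Rpower; lra.
  - intros z Hz. rewrite Rmin_left, Rmax_right in Hz by lra.
    apply (ex_derive_continuous (fun s => c * Rpower s (c - 1))).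
    eexists. apply is_derive_cpow. lra.
Qed.

Lemma int_comb (a b M x y : R) : 0 < x <= y ->
  is_RInt (fun s => a * Rpower s (a - 1) + M * (b * Rpower s (b - 1))) x y
    ((Rpower y a - Rpower x a) + M * (Rpower y b - Rpower x b)).
Proof.
  intros H. apply (is_RInt_plus _ _ _ _ _ _ (pow_int a x y H) (is_RInt_scal _ _ _ M _ (pow_int b x y H))).
Qed.

Lemma int_comb' (a b M x y : R) : 0 < x <= y ->
  is_RInt (fun s => a * Rpower s (a - 1) + (- M) * (b * Rpower s (b - 1))) x y
    ((Rpower y a - Rpower x a) + (- M) * (Rpower y b - Rpower x b)).
Proof. apply int_comb. Qed.

Lemma improper (f : R -> R) (a b M r0 rho : R) :
  0 < a -> 0 < b -> 0 <= M -> 0 < rho < r0 ->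
  (forall s, 0 < s < r0 -> continuous f s) ->
  (forall s, 0 < s < r0 -> 0 <= f s) ->
  (forall s, 0 < s < r0 -> Rabs (f s - a * Rpower s (a - 1)) <= M * (b * Rpower s (b - 1))) ->
  exists L, is_RInt_gen f (at_right 0) (at_point rho) L /\ Rabs (L - Rpower rho a) <= M * Rpower rho b.
Proof.
  intros Ha Hb HM Hrho Hc Hpos Hbd.
  assert (Hex : forall x y, 0 < x -> x <= y <= rho -> ex_RInt f x y).
  { intros x y Hx Hy. apply (ex_RInt_continuous (V := R_CompleteNormedModule)). intros z Hz.
    rewrite Rmin_left, Rmax_right in Hz by lra. apply Hc. lra. }
  set (I := fun x => RInt f x rho).
  assert (Hup : forall x, 0 < x <= rho -> I x <= (Rpower rho a - Rpower x a) + M * (Rpower rho b - Rpower x b)).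
  { intros x Hx. unfold I. rewrite <- (is_RInt_unique _ _ _ _ (int_comb a b M x rho Hx)).
    apply RInt_le. lra. apply Hex; lra. eexists; apply int_comb; lra.
    intros s Hs. pose proof (Hbd s ltac:(lra)) as H. apply Rabs_le_inv' in H. lra. }
  assert (Hlo : forall x, 0 < x <= rho -> (Rpower rho a - Rpower x a) + (- M) * (Rpower rho b - Rpower x b) <= I x).
  { intros x Hx. unfold I. rewrite <- (is_RInt_unique _ _ _ _ (int_comb' a b M x rho Hx)).
    apply RInt_le. lra. eexists; apply int_comb'; lra. apply Hex; lra.
    intros s Hs. pose proof (Hbd s ltac:(lra)) as H. apply Rabs_le_inv' in H. lra. }
  assert (Hmono : forall x y, 0 < x <= y -> y <= rho -> I y <= I x).
  { intros x y Hxy Hy. unfold I. rewrite <- (RInt_Chasles f x y rho) by (apply Hex; lra).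
    assert (0 <= RInt f x y). { apply RInt_ge_0. lra. apply Hex; lra. intros; apply Hpos; lra. }
    unfold plus; simpl. lra. }
  assert (HbndE : forall x, 0 < x <= rho -> I x <= Rpower rho a + M * Rpower rho b).
  { intros x Hx. pose proof (Hup x Hx). pose proof (Rpow_pos x a). pose proof (Rpow_pos x b). nra. }
  set (E := fun v => exists x, 0 < x <= rho /\ v = I x).
  assert (HEb : bound E).
  { exists (Rpower rho a + M * Rpower rho b). intros v [x [Hx ->]]. auto. }
  assert (HEn : exists v, E v) by (exists (I rho), rho; split; [lra|auto]).
  destruct (completeness E HEb HEn) as [L [HL1 HL2]].
  assert (HIL : forall x, 0 < x <= rho -> I x <= L) by (intros x Hx; apply HL1; exists x; auto).
  exists L. split.
  - intros P [eps HP].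
    assert (Hx0 : exists x0, 0 < x0 <= rho /\ L - eps < I x0).
    { apply NNPP. intros Hn. assert (L <= L - eps). 
      { apply HL2. intros v [x [Hx ->]]. apply Rnot_lt_le. intros Hlt. apply Hn. exists x; auto. }
      destruct eps; simpl in *; lra. }
    destruct Hx0 as [x0 [Hx0 HIx0]].
    apply (Filter_prod _ _ _ (fun x => 0 < x < x0) (fun y => y = rho)).
    + exists (mkposreal x0 (proj1 Hx0)). intros y Hy Hy0. split; auto.
      unfold ball in Hy; simpl in Hy; unfold AbsRing_ball, abs, minus, plus, opp in Hy; simpl in Hy.
      rewrite Ropp_0, Rplus_0_r in Hy. apply Rabs_def2 in Hy. lra.
    + reflexivity.
    + intros x y Hx ->. exists (I x). split.
      * exact (RInt_correct (V := R_CompleteNormedModule) f x rho (Hex x rho ltac:(lra) ltac:(lra))).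
      * apply HP. unfold ball; simpl; unfold AbsRing_ball, abs, minus, plus, opp; simpl.
        pose proof (Hmono x x0 ltac:(lra) ltac:(lra)). pose proof (HIL x ltac:(lra)).
        apply Rabs_def1; lra.
  - apply Rabs_le. split.
    + apply Rnot_lt_le. intros Hlt.
      set (eta := Rpower rho a - M * Rpower rho b - L).
      assert (Heta : 0 < eta) by (unfold eta; lra).
      destruct (Rpow_small a (eta / 2) Ha ltac:(lra)) as [del [Hdel Hsm]].
      set (x := Rmin rho (del / 2)).
      assert (Hx : 0 < x <= rho).
      { split. apply Rmin_glb_lt; lra. apply Rmin_l. }
      assert (Hxa : Rpower x a <= eta / 2).
      { apply Hsm. split. lra. eapply Rle_lt_trans. apply Rmin_r. lra. }
      pose proof (Hlo x Hx). pose proof (HIL x Hx). pose proof (Rpow_pos x b).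
      assert (M * Rpower x b >= 0) by nra.
      unfold eta in *. nra.
    + assert (L <= Rpower rho a + M * Rpower rho b).
      { apply HL2. intros v [x [Hx ->]]. auto. }
      lra.
Qed.

Theorem lemma2p1 (eps gamma : R) (p : R -> R) :
  0 < eps ->
  1 < gamma < 3 ->
  (* p smooth on (0, oo) *)
  (forall (n : nat) (x : R), 0 < x -> ex_derive_n p n x) ->
  (* p' > 0 on (0, oo) *)
  (forall x : R, 0 < x -> 0 < Derive p x) ->
  (* small-rho structure of the pressure *)
  (exists (d0 C : R) (P : R -> R), 0 < d0 /\
     forall rho : R, 0 < rho < d0 ->
       p rho = kappa gamma * Rpower rho gamma * (1 + P rho) /\
       forall n : nat, (n <= 4)%nat ->
         Rabs (Derive_n P n rho) <= C * Rpower rho (gamma - 1 - INR n)) ->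
  exists (d M : R), 0 < d /\
    forall rho : R, 0 < rho < d ->
      is_RInt_gen (k_integrand eps p) (at_right 0) (at_point rho)
        (k_fun eps p rho) /\
      ex_derive_n (k_fun eps p) 3 rho /\
      is_derive (k_fun eps p) rho (sqrt (Derive p rho) / (rho + eps * p rho)) /\
      Rabs (k_fun eps p rho - Rpower rho (theta gamma))
        <= M * Rpower rho (3 * theta gamma) /\
      Rabs (Derive (k_fun eps p) rho
            - theta gamma * Rpower rho (theta gamma - 1))
        <= M * Rpower rho (3 * theta gamma - 1) /\
      Rabs (Derive_n (k_fun eps p) 2 rho
            - theta gamma * (theta gamma - 1) * Rpower rho (theta gamma - 2))
        <= M * Rpower rho (3 * theta gamma - 2) /\
      Rabs (Derive_n (k_fun eps p) 3 rho
            - theta gamma * (theta gamma - 1) * (theta gamma - 2)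
              * Rpower rho (theta gamma - 3))
        <= M * Rpower rho (3 * theta gamma - 3).
Proof.
  intros Heps Hg Hsm _ Hstr.
  destruct (main_local eps gamma p Heps Hg Hsm Hstr) as [G [G1 [G2 [d1 [[dg [Cg [Hdg [HCg HG]]]] [Hd1 Hloc]]]]]].
  set (th := theta gamma) in *.
  assert (Hth : 0 < th) by (unfold th, theta; lra).
  set (f := k_integrand eps p).
  set (F := fun s => th * Rpower s (th - 1) + G s).
  set (F1 := fun s => th * ((th - 1) * Rpower s (th - 1 - 1)) + G1 s).
  set (F2 := fun s => th * ((th - 1) * ((th - 1 - 1) * Rpower s (th - 1 - 1 - 1))) + G2 s).
  set (d := Rmin d1 dg).
  assert (Hd : 0 < d) by (apply Rmin_glb_lt; lra).
  assert (Hin : forall s, 0 < s < d -> 0 < s < d1 /\ 0 < s < dg).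
  { intros s Hs. split; split; try lra; eapply Rlt_le_trans; try apply Hs. apply Rmin_l. apply Rmin_r. }
  assert (HfF : forall s, 0 < s < d -> f s = F s) by (intros s Hs; apply (Hloc s (proj1 (Hin s Hs)))).
  assert (HF : forall s, 0 < s < d -> is_derive F s (F1 s) /\ is_derive F1 s (F2 s)).
  { intros s Hs. destruct (HG s (proj2 (Hin s Hs))) as (D1 & D2 & _).
    split.
    - apply is_derive_plus'; auto. apply (is_derive_eq _ _ _ _ (is_derive_cpow th (th - 1) s ltac:(lra))). ring.
    - apply is_derive_plus'; auto.
      apply (is_derive_ext (fun t => th * (th - 1) * Rpower t (th - 1 - 1))). intros; simpl; ring.
      apply (is_derive_eq _ _ _ _ (is_derive_cpow (th * (th - 1)) (th - 1 - 1) s ltac:(lra))). ring. }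
  assert (Hcont : forall s, 0 < s < d -> continuous f s).
  { intros s Hs. apply (continuous_ext_loc _ F).
    apply (filter_imp (fun t => 0 < t < d)). intros t Ht; symmetry; apply HfF; auto. apply loc_int; auto.
    exact (ex_derive_continuous (K := R_AbsRing) (V := R_NormedModule) F s (ex_intro _ _ (proj1 (HF s Hs)))). }
  assert (Himp : forall rho, 0 < rho < d -> exists L, is_RInt_gen f (at_right 0) (at_point rho) L /\
                  Rabs (L - Rpower rho th) <= (Cg / (3 * th)) * Rpower rho (3 * th)).
  { intros rho Hrho. apply (improper f th (3 * th) (Cg / (3 * th)) d rho Hth ltac:(lra)).
    apply Rmult_le_pos; auto. apply Rlt_le, Rinv_0_lt_compat; lra. auto. auto.
    intros s Hs. apply (Hloc s (proj1 (Hin s Hs))).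
    intros s Hs. rewrite (HfF s Hs). unfold F.
    replace (th * Rpower s (th - 1) + G s - th * Rpower s (th - 1)) with (G s) by ring.
    destruct (HG s (proj2 (Hin s Hs))) as (_ & _ & B0 & _).
    replace (Cg / (3 * th) * (3 * th * Rpower s (3 * th - 1))) with (Cg * Rpower s (3 * th - 1)) by (field; lra).
    exact B0. }
  assert (Hk : forall rho, 0 < rho < d -> is_RInt_gen f (at_right 0) (at_point rho) (k_fun eps p rho) /\
                 Rabs (k_fun eps p rho - Rpower rho th) <= (Cg / (3 * th)) * Rpower rho (3 * th)).
  { intros rho Hrho. destruct (Himp rho Hrho) as [L [HL1 HL2]].
    assert (E : k_fun eps p rho = L).
    { unfold k_fun. apply (is_RInt_gen_unique (V := R_CompleteNormedModule)). exact HL1. }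
    rewrite E. auto. }
  assert (Hex : forall x y, 0 < x < d -> 0 < y < d -> ex_RInt f x y).
  { intros x y Hx Hy. apply (ex_RInt_continuous (V := R_CompleteNormedModule)). intros z Hz.
    apply Hcont. split.
    - eapply Rlt_le_trans; [|apply Hz]. apply Rmin_glb_lt; lra.
    - eapply Rle_lt_trans; [apply Hz|]. apply Rmax_lub_lt; lra. }
  assert (Hkf : forall x, 0 < x < d -> is_derive (k_fun eps p) x (f x)).
  { intros x Hx.
    assert (Hrep : forall y, 0 < y < d -> k_fun eps p y = k_fun eps p x + RInt f x y).
    { intros y Hy. unfold k_fun at 1. apply (is_RInt_gen_unique (V := R_CompleteNormedModule)).
      apply (is_RInt_gen_Chasles (V := R_NormedModule) f x).
      apply (Hk x Hx). apply is_RInt_gen_at_point.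
      exact (RInt_correct (V := R_CompleteNormedModule) f x y (Hex x y Hx Hy)). }
    apply (is_derive_ext_loc (fun y => k_fun eps p x + RInt f x y)).
    apply (filter_imp (fun t => 0 < t < d)). intros t Ht; symmetry; auto. apply loc_int; auto.
    assert (Hloc2 : locally x (fun b => is_RInt f x b ((fun y => RInt f x y) b))).
    { apply (filter_imp (fun t => 0 < t < d)). intros t Ht.
      exact (RInt_correct (V := R_CompleteNormedModule) f x t (Hex x t Hx Ht)). apply loc_int; auto. }
    apply (is_derive_eq _ _ _ _ (is_derive_plus' _ _ _ _ _ (is_derive_const' (k_fun eps p x) x)
       (is_derive_RInt f (fun y => RInt f x y) x x Hloc2 (Hcont x Hx)))). ring. }
  assert (HD1 : forall y, 0 < y < d -> Derive_n (k_fun eps p) 1 y = F y).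
  { intros y Hy. change (Derive (k_fun eps p) y = F y). rewrite <- (HfF y Hy). apply is_derive_unique. auto. }
  pose proof (loc_deriv (Derive_n (k_fun eps p) 1) F F1 d HD1 (fun y Hy => proj1 (HF y Hy))) as S2.
  assert (HD2 : forall y, 0 < y < d -> Derive_n (k_fun eps p) 2 y = F1 y) by (intros; apply S2; auto).
  pose proof (loc_deriv (Derive_n (k_fun eps p) 2) F1 F2 d HD2 (fun y Hy => proj2 (HF y Hy))) as S3.
  exists d, (Cg / (3 * th) + Cg). split; auto.
  assert (HC3 : 0 <= Cg / (3 * th)) by (apply Rmult_le_pos; auto; apply Rlt_le, Rinv_0_lt_compat; lra).
  intros rho Hrho.
  destruct (HG rho (proj2 (Hin rho Hrho))) as (_ & _ & B0 & B1 & B2).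
  pose proof (Rpow_pos rho (3 * th)). pose proof (Rpow_pos rho (3 * th - 1)).
  pose proof (Rpow_pos rho (3 * th - 1 - 1)). pose proof (Rpow_pos rho (3 * th - 1 - 2)).
  refine (conj _ (conj _ (conj _ (conj _ (conj _ (conj _ _)))))).
  - apply Hk; auto.
  - simpl. exists (F2 rho). apply S3; auto.
  - apply (Hkf rho Hrho).
  - eapply Rle_trans. apply (Hk rho Hrho). nra.
  - rewrite (is_derive_unique _ _ _ (Hkf rho Hrho)). rewrite (HfF rho Hrho). unfold F.
    replace (th * Rpower rho (th - 1) + G rho - th * Rpower rho (th - 1)) with (G rho) by ring.
    nra.
  - rewrite (HD2 rho Hrho). unfold F1.
    replace (th - 1 - 1) with (th - 2) by ring.
    replace (th * ((th - 1) * Rpower rho (th - 2)) + G1 rho - th * (th - 1) * Rpower rho (th - 2)) with (G1 rho) by ring.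
    replace (3 * th - 2) with (3 * th - 1 - 1) by ring. nra.
  - change (Derive_n (k_fun eps p) 3 rho) with (Derive (Derive_n (k_fun eps p) 2) rho).
    rewrite (proj2 (S3 rho Hrho)). unfold F2.
    replace (th - 1 - 1 - 1) with (th - 3) by ring. replace (th - 1 - 1) with (th - 2) by ring.
    replace (th * ((th - 1) * ((th - 2) * Rpower rho (th - 3))) + G2 rho - th * (th - 1) * (th - 2) * Rpower rho (th - 3)) with (G2 rho) by ring.
    replace (3 * th - 3) with (3 * th - 1 - 2) by ring. nra.
Qed.
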